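(* Let $G = (V, E, \ell)$ be a graph with positive edge lengths, let $A \subseteq V$ be nonempty, and let $p: V \to A$ be a pivot function for $A$, i.e., for every $v\in V$, $p(v)$ is a vertex of $A$ nearest to $v$ (ties broken arbitrarily but consistently). Then for any $u, v \in V$ with $v \notin B_G(u, p(u))$, we have $\mathrm{dist}_G(p(u), p(v)) \leq 4 \cdot \mathrm{dist}_G(u, v)$.
   Context: $\mathrm{dist}_G$ is the shortest-path distance in $G$ with respect to $\ell$. For vertices $u,w$, $B_G(u, w) = \{x \in V: \mathrm{dist}_G(u, x) < \mathrm{dist}_G(u, w)\}$. *)

(* Defs.v *)
From mathcomp Require Import all_boot all_order all_algebra.
From mathcomp Require Import classical_sets reals constructive_ereal ereal.
Set Implicit Arguments. Unset Strict Implicit. Unset Printing Implicit Defensive.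
Import Order.TTheory GRing.Theory Num.Theory.
Local Open Scope ring_scope.
Local Open Scope classical_set_scope.

(* A weighted undirected graph G = (V, E, l): V a finite type, E a symmetric
   edge relation, l : V -> V -> R the edge lengths (only values on edges matter). *)
Definition pos_len_graph {R : realType} {V : finType} (E : rel V) (l : V -> V -> R) :=
  (forall x y, E x y = E y x) /\
  (forall x y, E x y -> l x y = l y x) /\
  (forall x y, E x y -> 0 < l x y).

Fixpoint walk_len {R : realType} {V : finType} (l : V -> V -> R) (u : V) (s : seq V) : R :=
  match s with
  | [::] => 0
  | x :: s' => l u x + walk_len l x s'
  end.

(* Shortest-path distance, valued in extended reals (+oo if unreachable). *)
Definition dist {R : realType} {V : finType} (E : rel V) (l : V -> V -> R) (u v : V)
  : \bar R :=
  ereal_inf [set (walk_len l u s)%:E | s in [set s : seq V | path E u s && (last u s == v)]].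

Definition Bball {R : realType} {V : finType} (E : rel V) (l : V -> V -> R) (u w : V)
  : set V := [set x | (dist E l u x < dist E l u w)%E].

Definition pivot_fun {R : realType} {V : finType} (E : rel V) (l : V -> V -> R)
  (A : {set V}) (p : V -> V) :=
  forall v, p v \in A /\ (forall a, a \in A -> (dist E l v (p v) <= dist E l v a)%E).

(* Main.v *)
Require Import Defs.
From mathcomp Require Import all_boot all_order all_algebra.
From mathcomp Require Import classical_sets reals constructive_ereal ereal.
From mathcomp Require Import lra.
Import Order.TTheory GRing.Theory Num.Theory.
Local Open Scope ring_scope.
Local Open Scope classical_set_scope.
Set Implicit Arguments. Unset Strict Implicit.

Section S.
Variables (R : realType) (V : finType) (E : rel V) (l : V -> V -> R).
Hypothesis HG : pos_len_graph E l.

Lemma walk_len_ge0 u s : path E u s -> 0 <= walk_len l u s.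
Proof.
elim: s u => [|x s IH] u //= /andP[Eux Hp].
case: HG => _ [_ Hpos].
by rewrite addr_ge0 ?IH // ltW // Hpos.
Qed.

Lemma walk_len_cat u s1 s2 :
  walk_len l u (s1 ++ s2) = walk_len l u s1 + walk_len l (last u s1) s2.
Proof. by elim: s1 u => [|x s IH] u /=; rewrite ?add0r // IH addrA. Qed.

Lemma dist_ge0 u v : (0 <= dist E l u v)%E.
Proof.
apply/ereal_infP => _ [s /andP[Hp _] <-].
by rewrite lee_fin walk_len_ge0.
Qed.

Lemma dist_le u v s : path E u s -> last u s = v ->
  (dist E l u v <= (walk_len l u s)%:E)%E.
Proof.
move=> Hp Hl; apply: ge_ereal_inf; exists (walk_len l u s)%:E => //.
by exists s => //; rewrite /= Hp Hl eqxx.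
Qed.

Lemma dist_approx u v (a e : R) : dist E l u v = a%:E -> 0 < e ->
  exists s, [/\ path E u s, last u s = v & walk_len l u s < a + e].
Proof.
move=> Hd He.
have : (dist E l u v < (a + e)%:E)%E by rewrite Hd lte_fin ltrDl.
move/ereal_inf_lt => [_ [s /andP[Hp /eqP Hl] <-]].
by rewrite lte_fin => H; exists s.
Qed.

Lemma dist_triangle x y z :
  (dist E l x z <= dist E l x y + dist E l y z)%E.
Proof.
have Hyz0 := dist_ge0 y z; have Hxy0 := dist_ge0 x y.
case Hxy: (dist E l x y) Hxy0 => [a| |] // _; last first.
  by rewrite addye ?leey // gt_eqF // (lt_le_trans _ Hyz0) // ltNy0.
case Hyz: (dist E l y z) Hyz0 => [b| |] // _; last by rewrite addey ?leey.
apply/lee_addgt0Pr => e He.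
have He2 : 0 < e / 2 by rewrite divr_gt0.
have [s1 [P1 L1 W1]] := dist_approx Hxy He2.
have [s2 [P2 L2 W2]] := dist_approx Hyz He2.
apply: (le_trans (dist_le (s := s1 ++ s2) _ _)).
- by rewrite cat_path P1 L1 P2.
- by rewrite last_cat L1 L2.
rewrite walk_len_cat L1 -!EFinD lee_fin.
have -> : a + b + e = (a + e / 2) + (b + e / 2).
  by rewrite [e in LHS](splitr e); rewrite addrACA.
by rewrite lerD // ltW.
Qed.

Lemma walk_len_rcons u s x :
  walk_len l u (rcons s x) = walk_len l u s + l (last u s) x.
Proof. by rewrite -cats1 walk_len_cat /= addr0. Qed.

Lemma last_rev_belast (a : V) s : last (last a s) (rev (belast a s)) = a.
Proof.
elim: s a => [|b s IH] a //=.
by rewrite rev_cons last_rcons.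
Qed.

Lemma walk_len_rev x s : path E x s ->
  walk_len l (last x s) (rev (belast x s)) = walk_len l x s.
Proof.
case: HG => _ [Hsym _].
elim: s x => [|a s IH] x //= /andP[Exa Hp].
rewrite rev_cons walk_len_rcons IH // last_rev_belast.
by rewrite (Hsym x a Exa) addrC.
Qed.

Lemma dist_le_sym u v : (dist E l v u <= dist E l u v)%E.
Proof.
case: HG => HE _.
apply/ereal_infP => _ [s /andP[Hp /eqP Hl] <-].
rewrite -walk_len_rev // Hl.
apply: dist_le.
- rewrite -Hl rev_path.
  by apply: sub_path Hp => a b; rewrite /= HE.
- by rewrite -Hl last_rev_belast.
Qed.

Lemma dist_sym u v : dist E l u v = dist E l v u.
Proof. by apply/le_anti; rewrite !dist_le_sym. Qed.
End S.

Unset Implicit Arguments.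
Theorem claim4p2 (R : realType) (V : finType) (E : rel V) (l : V -> V -> R)
  (A : {set V}) (p : V -> V) :
  pos_len_graph E l -> (0 < #|A|)%N -> pivot_fun E l A p ->
  forall u v : V, ~ (Bball E l u (p u) v) ->
  (dist E l (p u) (p v) <= 4%:E * dist E l u v)%E.
Proof.
move=> HG _ Hp u v Hb.
have Huv : (dist E l u (p u) <= dist E l u v)%E.
  by rewrite leNgt; apply/negP => H; apply: Hb.
have Hv : (dist E l v (p v) <= dist E l v (p u))%E.
  by case: (Hp v) => _; apply; case: (Hp u).
have Hd0 := dist_ge0 HG u v.
case Hd: (dist E l u v) Hd0 => [d| |] // _; last first.
  by rewrite mulry gtr0_sg // mul1e leey.
rewrite Hd in Huv.
apply: (le_trans (dist_triangle HG _ u _)).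
apply: (le_trans (leeD (lexx _) (dist_triangle HG _ v _))).
rewrite (dist_sym HG (p u) u) Hd.
have H2 : (dist E l v (p v) <= (d + d)%:E)%E.
  apply: (le_trans Hv); apply: (le_trans (dist_triangle HG _ u _)).
  by rewrite (dist_sym HG v u) Hd EFinD leeD.
apply: (le_trans (leeD Huv (leeD (lexx _) H2))).
by rewrite -!EFinD -EFinM lee_fin; lra.
Qed.
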